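(* Let $G$ be a finite simple graph (with no restriction on its clique number). If $G$ is claw-free and every block of $G$ is a closed graph, then $G$ is strongly chordal and claw-free.
   Context: A strong elimination order of $G$ is an ordering $v_1,\dots,v_n$ of its vertices that is a perfect elimination order (whenever $v_iv_j,v_iv_k\in E(G)$ with $i<j,k$, then $v_jv_k\in E(G)$) and such that whenever $v_iv_k, v_kv_j, v_iv_\ell\in E(G)$ with $i<k<\ell$ and $i<j$, then $v_jv_\ell\in E(G)$; $G$ is strongly chordal if it has one. The claw is $K_{1,3}$. A closed order is an ordering $v_1,\dots,v_n$ such that whenever $v_iv_j,v_iv_k\in E(G)$ and either $i<j,k$ or $i>j,k$, then $v_jv_k\in E(G)$; $G$ is closed if it has one. A block is a maximal subgraph without cut vertices (2-connected). *)

(* Defs.v *)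
(* A vertex ordering v_1,...,v_n of a vertex set
   is a sequence s that is a permutation of its elements; the position of
   vertex x is index x s. *)
From mathcomp Require Import all_boot.
Set Implicit Arguments. Unset Strict Implicit. Unset Printing Implicit Defensive.

Section Graphs.
Variables (T : finType) (e : rel T).

Definition simple_graph : Prop := symmetric e /\ irreflexive e.

Definition peo (s : seq T) : Prop :=
  forall x y z, x \in s -> y \in s -> z \in s ->
    index x s < index y s -> index x s < index z s ->
    e x y -> e x z -> y != z -> e y z.

Definition strong_elim_order (s : seq T) : Prop :=
  peo s /\
  forall vi vj vk vl, vi \in s -> vj \in s -> vk \in s -> vl \in s ->
    index vi s < index vk s -> index vk s < index vl s ->
    index vi s < index vj s ->
    e vi vk -> e vk vj -> e vi vl -> vj != vl -> e vj vl.

Definition strongly_chordal : Prop :=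
  exists s : seq T, perm_eq s (enum T) /\ strong_elim_order s.

Definition claw_free : Prop :=
  ~ exists a b c d : T,
      [/\ uniq [:: a; b; c; d], e a b, e a c & e a d] /\
      [/\ ~~ e b c, ~~ e b d & ~~ e c d].

Definition closed_order_on (B : {set T}) (s : seq T) : Prop :=
  perm_eq s (enum B) /\
  forall x y z, x \in s -> y \in s -> z \in s ->
    e x y -> e x z -> y != z ->
    (index x s < index y s /\ index x s < index z s \/
     index y s < index x s /\ index z s < index x s) ->
    e y z.

Definition closed_on (B : {set T}) : Prop := exists s, closed_order_on B s.

Definition induced_rel (B : {set T}) : rel T :=
  [rel x y | [&& x \in B, y \in B & e x y]].

Definition connected_on (B : {set T}) : Prop :=
  forall x y, x \in B -> y \in B -> connect (induced_rel B) x y.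

Definition nonsep_on (B : {set T}) : Prop :=
  B != set0 /\ connected_on B /\ forall v, v \in B -> connected_on (B :\ v).

(* a block: vertex set of a maximal connected subgraph without cut vertices
   (blocks are induced subgraphs) *)
Definition is_block (B : {set T}) : Prop :=
  nonsep_on B /\ forall B' : {set T}, B \subset B' -> nonsep_on B' -> B' = B.

End Graphs.

(* Main.v *)
Require Import Defs.
From mathcomp Require Import all_boot zify.
From Stdlib Require Import Classical.
Set Implicit Arguments. Unset Strict Implicit. Unset Printing Implicit Defensive.

Section Main.
Variables (T : finType) (e : rel T).
Hypothesis esym : symmetric e.
Hypothesis eirr : irreflexive e.

Ltac clean := repeat match goal with
 | H : is_true (_ \in _) |- _ => clear H
 | H : is_true (e _ _) |- _ => clear H
 | H : is_true (~~ e _ _) |- _ => clear H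
 | H : forall _, _ |- _ => clear H
 | H : is_true (_ != _) |- _ => clear H
 | H : is_true (_ \notin _) |- _ => clear H
 end.
Ltac slia := clean; lia.

Definition injS (S : {set T}) (k : T -> nat) := {in S &, injective k}.

Definition goodk (S : {set T}) (k : T -> nat) :=
  forall x y z w, x \in S -> y \in S -> z \in S -> w \in S ->
  k x < k y -> k y < k z -> k x < k w -> e x y -> e x z ->
  (w = y \/ e y w) -> (w = z \/ e z w).

Definition clk (S : {set T}) (k : T -> nat) :=
  forall x y z, x \in S -> y \in S -> z \in S -> e x y -> e x z -> y != z ->
   (k x < k y /\ k x < k z \/ k y < k x /\ k z < k x) -> e y z.

Lemma clk_good S k : injS S k -> clk S k -> goodk S k.
Proof.
move=> inj cl x y z w xS yS zS wS kxy kyz kxw exy exz hw.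
have eyz : e y z.
  apply: (cl x) => //; [apply/eqP => ?; subst; slia | left; slia].
case: hw => [->|eyw]; first by right; rewrite esym.
case: (eqVneq w z) => [->|wz]; first by left.
right; case: (ltngtP (k y) (k w)) => hyw.
- apply: (cl y) => //; first by rewrite eq_sym. left; slia.
- have exw : e x w.
    rewrite esym in exy.
    apply: (cl y) => //; first by apply/eqP => ?; subst; slia. right; slia.
  rewrite esym; apply: (cl x) => //; left; slia.
- have := inj _ _ yS wS hyw => ?; subst; by rewrite eirr in eyw.
Qed.

Lemma clk_rev (S : {set T}) k N : (forall x, x \in S -> k x < N) -> clk S k ->
  clk S (fun x => N - k x).
Proof.
move=> hN cl x y z xS yS zS exy exz yz h; apply: (cl x) => //.
have := hN x xS; have := hN y yS; have := hN z zS; slia.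
Qed.

Lemma injS_rev (S : {set T}) k N : (forall x, x \in S -> k x < N) -> injS S k ->
  injS S (fun x => N - k x).
Proof. move=> hN inj x y xS yS h; apply: inj => //; have := hN x xS; have := hN y yS; slia. Qed.

Lemma clk_sub (S S' : {set T}) k : S' \subset S -> clk S k -> clk S' k.
Proof. move=> /subsetP sub cl x y z xS yS zS; apply: cl; exact: sub. Qed.
Lemma injS_sub (S S' : {set T}) k : S' \subset S -> injS S k -> injS S' k.
Proof. move=> /subsetP sub inj x y xS yS; apply: inj; exact: sub. Qed.
Lemma goodk_sub (S S' : {set T}) k : S' \subset S -> goodk S k -> goodk S' k.
Proof. move=> /subsetP sub g x y z w xS yS zS wS; apply: g; exact: sub. Qed.


Lemma glue (P Q D : {set T}) ka kb (k : T -> nat) :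
  (forall x, k x = if x \in P then ka x else (\max_(y in P) ka y).+1 + kb x) ->
  (forall y, y \in Q -> y \notin P) -> D \subset Q ->
  (forall d1 d2, d1 \in D -> d2 \in D -> d1 = d2) ->
  (forall a b, a \in P -> b \in Q -> e a b -> b \in D) ->
  (forall a d, a \in P -> d \in D -> ka a < ka d) ->
  injS (P :|: D) ka -> goodk (P :|: D) ka ->
  injS Q kb -> goodk Q kb ->
  injS (P :|: Q) k /\ goodk (P :|: Q) k.
Proof.
move=> hk QnP /subsetP DQ D1 edg PD injA gA injB gB.
set M := (\max_(y in P) ka y).+1.
have hM : forall y, y \in P -> ka y < M.
  by move=> y yP; rewrite ltnS; apply: (leq_bigmax_cond (F := ka)).
have DnP : forall y, y \in D -> y \notin P by move=> y /DQ; apply: QnP.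
have kP : forall y, y \in P -> k y = ka y by move=> y yP; rewrite hk yP.
have kQ : forall y, y \notin P -> k y = M + kb y by move=> y yP; rewrite hk (negbTE yP).
clearbody M; clear hk.
split.
  move=> x y; rewrite !inE => /orP[xP|xQ] /orP[yP|yQ].
  - rewrite !kP // => h; apply: injA => //; rewrite inE ?xP ?yP //.
  - rewrite kP // kQ ?QnP // => h; have := hM x xP; slia.
  - rewrite (kQ x) ?QnP // (kP y) // => h; have := hM y yP; slia.
  - rewrite (kQ x) ?QnP // (kQ y) ?QnP // => h; apply: injB => //; slia.
have cmp : forall a b, a \in P :|: D -> b \in P :|: D -> k a < k b -> ka a < ka b.
  move=> a b; rewrite !inE => /orP[aP|aD] /orP[bP|bD].
  - by rewrite !kP.
  - by move=> _; apply: PD.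
  - rewrite (kQ a) ?DnP // (kP b) // => h; have := hM b bP; slia.
  - by rewrite (D1 a b aD bD); slia.
move=> x y z w /setUP[xP|xQ] yS zS wS kxy kyz kxw exy exz hw.
- have inPD : forall t, t \in P :|: Q -> e x t -> t \in P :|: D.
    move=> t; rewrite !inE => /orP[->//|tQ] ext; apply/orP; right; exact: edg ext.
  have xPD : x \in P :|: D by rewrite inE xP.
  have yPD := inPD y yS exy; have zPD := inPD z zS exz.
  case wPD : (w \in P :|: D).
    apply: (gA x y z w) => //; exact: cmp.
  move/negbT: wPD; rewrite inE negb_or => /andP[wnP wnD].
  have wQ : w \in Q by move: wS => /setUP[wP|//]; rewrite wP in wnP.
  case: hw => [wy|eyw]; first by move: yPD; rewrite inE -wy (negbTE wnP) (negbTE wnD).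
  move: yPD; rewrite inE => /orP[yP|yD].
    by have := edg y w yP wQ eyw; rewrite (negbTE wnD).
  move: zPD; rewrite inE => /orP[zP|zD].
    move: kyz; rewrite (kP z) // (kQ y) ?DnP // => h; exfalso; have := hM z zP; slia.
  by move: kyz; rewrite (D1 y z yD zD) ltnn.
- have xnP := QnP x xQ.
  have later : forall t, t \in P :|: Q -> k x < k t -> t \in Q /\ kb x < kb t.
    move=> t; rewrite inE => /orP[tP|tQ].
      by rewrite (kP t) // (kQ x) //; have := hM t tP; slia.
    by rewrite (kQ t) ?QnP // (kQ x) //; split => //; slia.
  have [yQ ky] := later y yS kxy.
  have [zQ kz] := later z zS (ltn_trans kxy kyz).
  have [wQ kw] := later w wS kxw.
  apply: (gB x y z w) => //.
  by move: kyz; rewrite (kQ y) ?QnP // (kQ z) ?QnP //; slia.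
Qed.


Lemma induced_sym (S : {set T}) : symmetric (induced_rel e S).
Proof. by move=> a b; rewrite /induced_rel /= esym; case: (a \in S); case: (b \in S). Qed.

Lemma crossing (S : {set T}) (X : {pred T}) x y :
  connected_on e S -> x \in S -> y \in S -> x \in X -> y \notin X ->
  exists a b, [/\ a \in S, b \in S, a \in X, b \notin X & e a b].
Proof.
move=> con xS yS Xx Xy; apply: NNPP => hno.
have cl : closed (induced_rel e S) X.
  move=> a b /= /and3P[aS bS eab]; apply/idP/idP => ha; apply/negPn/negP => hb;
    apply: hno; [exists a, b | exists b, a]; split => //; by rewrite esym.
have := closed_connect cl (con x y xS yS).
by rewrite Xx (negbTE Xy).
Qed.

Lemma conn_step (S : {set T}) x a b :
  connect (induced_rel e S) x a -> a \in S -> b \in S -> e a b ->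
  connect (induced_rel e S) x b.
Proof.
move=> xa aS bS eab; apply: (connect_trans xa); apply: connect1 => /=.
by rewrite /induced_rel /= aS bS eab.
Qed.

Definition simpl_in (S : {set T}) r :=
  forall a b, a \in S -> b \in S -> a != b -> e r a -> e r b -> e a b.

Lemma simpl_sub (S S' : {set T}) r : S' \subset S -> simpl_in S r -> simpl_in S' r.
Proof. move=> /subsetP sub h a b aS bS; apply: h; exact: sub. Qed.

Lemma conn_in (S : {set T}) x a :
  connect (induced_rel e S) x a -> x \in S -> a \in S.
Proof.
move=> xa xS.
have cl : closed (induced_rel e S) [pred z | z \in S].
  by move=> b c /= /and3P[bS cSS _]; rewrite !inE bS cSS.
by have := closed_connect cl xa; rewrite !inE xS => <-.
Qed.

Lemma conn_remove_simpl (S : {set T}) u :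
  connected_on e S -> u \in S -> simpl_in S u -> connected_on e (S :\ u).
Proof.
move=> con uS su x y xS' yS'; apply: NNPP => nc.
have xS : x \in S by move: xS'; rewrite inE => /andP[].
have yS : y \in S by move: yS'; rewrite inE => /andP[].
pose X := [pred z | connect (induced_rel e (S :\ u)) x z].
have clX : forall a b, a \in X -> b \in S :\ u -> e a b -> b \in X.
  move=> a b xa bS' eab; rewrite inE in xa *; apply: (conn_step xa) => //.
  exact: (conn_in xa).
have Xx : x \in X by rewrite inE connect0.
have Xy : y \notin X by rewrite inE; apply/negP.
have [a0 [b0 [aS bS aX bX eab]]] := crossing con xS yS Xx Xy.
have bu : b0 = u.
  case: (eqVneq b0 u) => // bu; move: bX; rewrite (clX a0 b0 aX) //.
  by rewrite in_setD1 bu bS.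
subst b0.
pose X' := [pred z | (z == u) || (z \in X)].
have Xx' : x \in X' by rewrite inE Xx orbT.
have Xy' : y \notin X'.
  rewrite inE negb_or Xy andbT; move: yS'; rewrite !inE => /andP[] //.
have [a' [b' [aS' bS' aX' bX' eab']]] := crossing con xS yS Xx' Xy'.
move: bX'; rewrite inE negb_or => /andP[b'u b'X].
move: aX'; rewrite inE => /orP[/eqP a'u|a'X]; last first.
  by move: b'X; rewrite (clX a' b' a'X) // in_setD1 b'u bS'.
subst a'.
have ab' : a0 != b' by apply/eqP => ?; subst; rewrite aX in b'X.
have := su a0 b' aS bS' ab'; rewrite esym eab eab' => /(_ isT isT) e2.
by move: b'X; rewrite (clX a0 b' aX) // in_setD1 b'u bS'.
Qed.


Lemma exists_max (S : {set T}) (k : T -> nat) p : p \in S ->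
  exists2 u, u \in S & forall x, x \in S -> k x <= k u.
Proof.
move=> pS; case: (@arg_maxnP T p (fun x => x \in S) k pS) => u uS hu.
by exists u => // x xS; exact: hu.
Qed.

Lemma inD1 (S : {set T}) u x : x \in S -> x != u -> x \in S :\ u.
Proof. by move=> xS xu; rewrite in_setD1 xu xS. Qed.

Lemma umbrella n : forall (S : {set T}) k, #|S| <= n -> injS S k -> clk S k ->
  connected_on e S -> forall p m q, p \in S -> m \in S -> q \in S ->
  k p < k m -> k m < k q -> e p q -> e p m /\ e m q.
Proof.
elim: n => [|n IH] S k cS inj cl con p m q pS mS qS hpm hmq epq.
  by move: cS; rewrite leqn0 => /eqP/cards0_eq S0; rewrite S0 inE in pS.
have [u uS umax] := exists_max k pS.
have ltu : forall x, x \in S -> x != u -> k x < k u.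
  move=> x xS xu; have := umax x xS; rewrite leq_eqVlt => /orP[/eqP h|//].
  by move: xu; rewrite (inj x u xS uS h) eqxx.
have su : simpl_in S u.
  move=> a b aS bS ab eua eub; apply: (cl u) => //; right.
  split; apply: ltu => //; apply/eqP => ?; subst; by rewrite eirr in eua, eub.
have cS' : #|S :\ u| <= n by move: cS; rewrite (cardsD1 u S) uS add1n ltnS.
have sub' : S :\ u \subset S by apply/subsetP => x; rewrite in_setD1 => /andP[].
have IH' := IH (S :\ u) k cS' (injS_sub sub' inj) (clk_sub sub' cl)
  (conn_remove_simpl con uS su).
case: (eqVneq q u) => [qu|qu]; last first.
  have pu : p != u by apply/eqP => ?; subst; have := ltu q qS qu; slia.
  have mu : m != u by apply/eqP => ?; subst; have := ltu q qS qu; slia.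
  by apply: (IH' p m q) => //; apply: inD1.
subst q.
have pu : p != u by apply/eqP => ?; subst; rewrite eirr in epq.
have mu : m != u by apply/eqP => ?; subst; slia.
suff emu : e m u.
  split => //; apply: su => //; try by rewrite esym.
  by apply/eqP => ?; subst; slia.
case emu : (e m u) => //; exfalso; move/negbT: emu => nemu.
case: (classic (exists c, [/\ c \in S, e u c & k m < k c])) => [[c [cSS euc kmc]]|nc].
  have cu : c != u by apply/eqP => ?; subst; rewrite eirr in euc.
  have epc : e p c.
    apply: su => //; try by rewrite esym.
    by apply/eqP => ?; subst; slia.
  have [epm _] := IH' p m c (inD1 pS pu) (inD1 mS mu) (inD1 cSS cu) hpm kmc epc.
  move/negP: nemu; apply; apply: (cl p) => //; left; split => //.
  by apply: ltu.
have hc : forall c, c \in S -> e u c -> k c <= k m.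
  by move=> c cSS euc; rewrite leqNgt; apply/negP => h; apply: nc; exists c.
pose X := [pred w | (w == u) || [exists c, [&& c \in S, e u c & k w <= k c]]].
have Xu : u \in X by rewrite inE eqxx.
have Xm : m \notin X.
  rewrite inE negb_or mu /=; apply/existsP => -[c /and3P[cSS euc kmc]].
  have := hc c cSS euc => kcm.
  have cm : c = m by apply: inj => //; slia.
  by subst; move/negP: nemu; rewrite esym.
have [a [b [aS bS aX bX eab]]] := crossing con uS mS Xu Xm.
move: bX; rewrite inE negb_or => /andP[bu /existsPn bX].
have bX' : forall c, c \in S -> e u c -> k c < k b.
  by move=> c cSS euc; have := bX c; rewrite cSS euc /= -ltnNge.
move: aX; rewrite inE => /orP[/eqP au|/existsP[c /and3P[cSS euc kac]]].
  by subst; have := bX' b bS eab; rewrite ltnn.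
have cu : c != u by apply/eqP => ?; subst; rewrite eirr in euc.
have au : a != u by apply/eqP => ?; subst; have := bX' b bS eab; rewrite ltnn.
have kcb := bX' c cSS euc.
have ecb : e c b.
  case: (eqVneq a c) => [?|ac]; first by subst.
  have kac' : k a < k c.
    rewrite ltn_neqAle kac andbT; apply/eqP => h; move/eqP: ac; apply.
    exact: inj.
  by have [_ ->] := IH' a c b (inD1 aS au) (inD1 cSS cu) (inD1 bS bu) kac' kcb eab.
have ebu : e b u.
  apply: (cl c) => //; first by rewrite esym.
  left; split => //; exact: ltu.
by have := bX' b bS; rewrite esym ebu ltnn => /(_ isT).
Qed.


Definition keyC (k : T -> nat) (r : T) (N : nat) (x : T) :=
  if x == r then 4*N+2 else if e r x then
    (if k x < k r then 2*N+1 + k x else 3*N+1 + (N - k x))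
  else (if k x < k r then k x else N + (N - k x)).

Variant keyC_spec (k : T -> nat) (r : T) (N : nat) (x : T) : nat -> Prop :=
| KR of x = r : keyC_spec k r N x (4*N+2)
| K0 of x != r & ~~ e r x & k x < k r : keyC_spec k r N x (k x)
| K1 of x != r & ~~ e r x & k r < k x : keyC_spec k r N x (N + (N - k x))
| K2 of x != r & e r x & k x < k r : keyC_spec k r N x (2*N+1 + k x)
| K3 of x != r & e r x & k r < k x : keyC_spec k r N x (3*N+1 + (N - k x)).

Lemma keyCP (S : {set T}) k r N x : injS S k -> r \in S -> x \in S ->
  keyC_spec k r N x (keyC k r N x).
Proof.
move=> inj rS xS; rewrite /keyC; case: (eqVneq x r) => [->|xr]; first exact: KR.
have tri : k x < k r \/ k r < k x.
  case: (ltngtP (k x) (k r)) => h; [by left|by right|].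
  by move: xr; rewrite (inj x r xS rS h) eqxx.
case erx : (e r x); case: tri => h.
- by rewrite h; apply: K2; rewrite ?erx.
- by rewrite ltnNge (ltnW h) /=; apply: K3; rewrite ?erx.
- by rewrite h; apply: K0; rewrite ?erx.
- by rewrite ltnNge (ltnW h) /=; apply: K1; rewrite ?erx.
Qed.

Lemma lemmaC (S : {set T}) k r : injS S k -> clk S k -> connected_on e S ->
  r \in S -> simpl_in S r ->
  exists k', [/\ injS S k', goodk S k' & forall x, x \in S -> x != r -> k' x < k' r].
Proof.
move=> inj cl con rS sr.
set N := (\max_(y in S) k y).+1.
have hN : forall y, y \in S -> k y < N.
  by move=> y yS; rewrite ltnS; apply: (leq_bigmax_cond (F := k)).
clearbody N.
have U := umbrella (leqnn #|S|) inj cl con.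
have tri : forall x, x \in S -> x != r -> k x < k r \/ k r < k x.
  move=> x xS xr; case: (ltngtP (k x) (k r)) => h; [by left|by right|].
  by move: xr; rewrite (inj x r xS rS h) eqxx.
have F1 : forall x y, x \in S -> y \in S -> ~~ e r x -> k x < k r -> e x y ->
    y != r /\ k y < k r.
  move=> x y xS yS nerx kx exy.
  have yr : y != r by apply/eqP => ?; subst; move/negP: nerx; rewrite esym.
  split => //; case: (tri y yS yr) => // h.
  by have [exr _] := U x r y xS rS yS kx h exy; move/negP: nerx; rewrite esym.
have F2 : forall x y, x \in S -> y \in S -> ~~ e r x -> k r < k x -> e x y ->
    y != r /\ k r < k y.
  move=> x y xS yS nerx kx exy.
  have yr : y != r by apply/eqP => ?; subst; move/negP: nerx; rewrite esym.
  split => //; case: (tri y yS yr) => // h.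
  by have [_ erx] := U y r x yS rS xS h kx (eqbLR (esym _ _) exy); move/negP: nerx.
have F3 : forall x a, x \in S -> a \in S -> ~~ e r x -> k x < k r -> e r a ->
    k a < k r -> k x < k a.
  move=> x a xS aS nerx kx era ka.
  case: (ltngtP (k x) (k a)) => // h.
    have [_ exr] := U a x r aS xS rS h kx (eqbLR (esym _ _) era).
    by move/negP: nerx; rewrite esym.
  by have := inj _ _ xS aS h => ?; subst; rewrite era in nerx.
have F4 : forall x a, x \in S -> a \in S -> ~~ e r x -> k r < k x -> e r a ->
    k r < k a -> k a < k x.
  move=> x a xS aS nerx kx era ka.
  case: (ltngtP (k x) (k a)) => // h.
    by have [erx _] := U r x a rS xS aS kx h era; rewrite erx in nerx.
  by have := inj _ _ xS aS h => ?; subst; rewrite era in nerx.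
pose k' := keyC k r N.
have kmax : forall y, y \in S -> k' y <= 4*N+2.
  move=> y yS; have := hN y yS; rewrite /k'.
  case: (keyCP N inj rS yS) => *; slia.
have kr : k' r = 4*N+2 by rewrite /k' /keyC eqxx.
have inNr : forall t, t \in S -> 2*N+1 <= k' t -> t = r \/ e r t.
  move=> t tS; have := hN t tS; rewrite /k'.
  by case: (keyCP N inj rS tS) => *; [left|slia|slia|right|right].
have cliq : forall z w, z \in S -> w \in S -> (z = r \/ e r z) -> (w = r \/ e r w) ->
    w = z \/ e z w.
  move=> z w zS wS [->|erz] [->|erw]; [by left|by right|by right; rewrite esym|].
  case: (eqVneq w z) => [->|wz]; [by left|right].
  by apply: sr => //; rewrite eq_sym.
have ordL : forall a b, a \in S -> b \in S -> a != r -> b != r -> k a < k r ->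
    k b < k r -> k' a < k' b -> k a < k b.
  move=> a b aS bS ar br ka kb; have := hN a aS; have := hN b bS; rewrite /k'.
  case: (keyCP N inj rS aS) => [ar'|ar' nera _|ar' nera ka'|ar' era _|ar' era ka'];
    try (by move: ar; rewrite ar' eqxx); try (exfalso; slia);
  case: (keyCP N inj rS bS) => [br'|br' nerb _|br' nerb kb'|br' erb _|br' erb kb'];
    try (by move: br; rewrite br' eqxx); try (exfalso; slia); try slia.
  by move=> *; apply: F3.
have ordR : forall a b, a \in S -> b \in S -> a != r -> b != r -> k r < k a ->
    k r < k b -> k' a < k' b -> k b < k a.
  move=> a b aS bS ar br ka kb; have := hN a aS; have := hN b bS; rewrite /k'.
  case: (keyCP N inj rS aS) => [ar'|ar' nera ka'|ar' nera _|ar' era ka'|ar' era _];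
    try (by move: ar; rewrite ar' eqxx); try (exfalso; slia);
  case: (keyCP N inj rS bS) => [br'|br' nerb kb'|br' nerb _|br' erb kb'|br' erb _];
    try (by move: br; rewrite br' eqxx); try (exfalso; slia); try slia.
  by move=> *; apply: F4.
exists k'; split.
- move=> a b aS bS; have := hN a aS; have := hN b bS; rewrite /k'.
  case: (keyCP N inj rS aS) => [->|? ? ?|? ? ?|? ? ?|? ? ?];
  case: (keyCP N inj rS bS) => [->|? ? ?|? ? ?|? ? ?|? ? ?] //;
  move=> *; apply: inj => //; slia.
- move=> x y z w xS yS zS wS kxy kyz kxw exy exz hw.
  move: (kxy) (kxw); rewrite /k'.
  case: (keyCP N inj rS xS) => [xr|xr nerx kx|xr nerx kx|xr erx kx|xr erx kx] kxy' kxw';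
    rewrite -/k' in kxy' kxw'.
  + by subst; have := kmax y yS; slia.
  + have [yr ky] := F1 x y xS yS nerx kx exy.
    have [zr kz] := F1 x z xS zS nerx kx exz.
    have hxy := ordL x y xS yS xr yr kx ky kxy.
    have hyz := ordL y z yS zS yr zr ky kz kyz.
    have hxw : k x < k w.
      case: (eqVneq w r) => [->//|wr]; case: (tri w wS wr) => h.
        exact: ordL x w xS wS xr wr kx h kxw.
      slia.
    exact: (clk_good inj cl) x y z w xS yS zS wS hxy hyz hxw exy exz hw.
  + have [yr ky] := F2 x y xS yS nerx kx exy.
    have [zr kz] := F2 x z xS zS nerx kx exz.
    have hxy := ordR x y xS yS xr yr kx ky kxy.
    have hyz := ordR y z yS zS yr zr ky kz kyz.
    have hxw : k w < k x.
      case: (eqVneq w r) => [->//|wr]; case: (tri w wS wr) => h.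
        slia.
      exact: ordR x w xS wS xr wr kx h kxw.
    have hN' := hN.
    apply: (clk_good (injS_rev hN inj) (clk_rev hN cl) xS yS zS wS _ _ _ exy exz hw).
    * have := hN x xS; have := hN y yS; slia.
    * have := hN z zS; have := hN y yS; slia.
    * have := hN x xS; have := hN w wS; slia.
  + apply: cliq => //; apply: inNr => //; slia.
  + apply: cliq => //; apply: inNr => //; slia.
- move=> x xS xr; rewrite kr; have := hN x xS; rewrite /k'.
  case: (keyCP N inj rS xS) => [xr'|*|*|*|*]; try slia.
  by move: xr; rewrite xr' eqxx.
Qed.


Lemma card_lt (A S : {set T}) a : A \subset S -> a \in S -> a \notin A -> #|A| < #|S|.
Proof. by move=> AS aS aA; apply: proper_card; apply/properP; split => //; exists a. Qed.

Lemma glue' (P Q D : {set T}) ka kb :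
  (forall y, y \in Q -> y \notin P) -> D \subset Q ->
  (forall d1 d2, d1 \in D -> d2 \in D -> d1 = d2) ->
  (forall a b, a \in P -> b \in Q -> e a b -> b \in D) ->
  (forall a d, a \in P -> d \in D -> ka a < ka d) ->
  injS (P :|: D) ka -> goodk (P :|: D) ka -> injS Q kb -> goodk Q kb ->
  exists k, [/\ injS (P :|: Q) k, goodk (P :|: Q) k &
    forall r, r \in Q -> (forall x, x \in Q -> x != r -> kb x < kb r) ->
      forall x, x \in P :|: Q -> x != r -> k x < k r].
Proof.
move=> QnP DQ D1 edg PD iA gA iB gB.
pose k := fun x => if x \in P then ka x else (\max_(y in P) ka y).+1 + kb x.
have [ik gk] := glue (k := k) (fun x => erefl) QnP DQ D1 edg PD iA gA iB gB.
exists k; split => // r rQ rmax x /setUP[xP|xQ] xr; rewrite /k (negbTE (QnP r rQ)).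
  rewrite xP; have : ka x <= \max_(y in P) ka y by apply: (leq_bigmax_cond (F := ka)).
  slia.
by rewrite (negbTE (QnP x xQ)) ltn_add2l; apply: rmax.
Qed.

Hypothesis hclaw : claw_free e.
Hypothesis hcl : forall S : {set T}, nonsep_on e S -> exists k, injS S k /\ clk S k.

Definition claimP (S : {set T}) :=
  (exists k, injS S k /\ goodk S k) /\
  forall r, r \in S -> simpl_in S r ->
    exists k, [/\ injS S k, goodk S k & forall x, x \in S -> x != r -> k x < k r].

Lemma claw_simpl (C : {set T}) v a b d : a \in C -> b \in C -> d \notin C ->
  a != b -> e v a -> e v b -> e v d -> ~~ e a d -> ~~ e b d -> e a b.
Proof.
move=> aC bC dC ab eva evb evd nad nbd; case eab : (e a b) => //; exfalso.
apply: hclaw; exists v, a, b, d; split; split => //; last by rewrite eab.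
have vn : forall t, e v t -> v != t by move=> t evt; apply/eqP => ?; subst; rewrite eirr in evt.
rewrite /= !inE !negb_or vn // vn // vn //= ab /=.
have ad : a != d by apply/eqP => ?; subst; rewrite aC in dC.
have bd : b != d by apply/eqP => ?; subst; rewrite bC in dC.
by rewrite ad bd.
Qed.


Lemma claim_step (S : {set T}) :
  (forall S' : {set T}, #|S'| < #|S| -> claimP S') -> claimP S.
Proof.
move=> IH.
have s0u : forall d1 d2 : T, d1 \in (set0 : {set T}) -> d2 \in (set0 : {set T}) -> d1 = d2.
  by move=> ? ?; rewrite inE.
have s0o : forall (ka : T -> nat) (a d : T), d \in (set0 : {set T}) -> ka a < ka d.
  by move=> ? ? ?; rewrite inE.
have s1u : forall v d1 d2 : T, d1 \in [set v] -> d2 \in [set v] -> d1 = d2.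
  by move=> v d1 d2; rewrite !inE => /eqP-> /eqP->.
case: (eqVneq S set0) => [S0|Sn0].
  subst; split; first by exists (fun _ => 0); split => x; rewrite inE.
  by move=> r; rewrite inE.
case: (classic (connected_on e S)) => con; last first.
  have [x [y [xS yS nxy]]] : exists x y,
      [/\ x \in S, y \in S & ~ connect (induced_rel e S) x y].
    apply: NNPP => h; apply: con => x y xS yS; apply: NNPP => nc; apply: h.
    by exists x, y.
  pose C := [set z in S | connect (induced_rel e S) x z].
  have CS : C \subset S by apply/subsetP => z; rewrite inE => /andP[].
  have xC : x \in C by rewrite inE xS connect0.
  have yC : y \notin C by rewrite inE yS; apply/negP.
  have clC : forall a b, a \in C -> b \in S -> e a b -> b \in C.
    move=> a b; rewrite !inE => /andP[aS xa] bS eab; rewrite bS.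
    exact: conn_step xa aS bS eab.
  pose D := S :\: C.
  have DS : D \subset S by apply/subsetP => z; rewrite inE => /andP[].
  have xD : x \notin D by rewrite inE xC.
  have yD : y \in D by rewrite inE yC yS.
  have [IC1 IC2] := IH C (card_lt CS yS yC).
  have [ID1 ID2] := IH D (card_lt DS xS xD).
  have DnC : forall z, z \in D -> z \notin C by move=> z; rewrite inE => /andP[].
  have CnD : forall z, z \in C -> z \notin D by move=> z zC; rewrite inE zC.
  have SCD : S \subset C :|: D.
    by apply/subsetP => z zS; rewrite in_setU in_setD zS andbT orbN.
  have SDC : S \subset D :|: C by rewrite setUC.
  have noCD : forall a b, a \in C -> b \in D -> e a b -> b \in set0.
    move=> a b aC bD eab; move: (DnC b bD).
    by rewrite (clC a b aC (subsetP DS b bD)).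
  have noDC : forall a b, a \in D -> b \in C -> e a b -> b \in set0.
    move=> a b aD bC eab; move: (DnC a aD).
    by rewrite (clC b a bC (subsetP DS a aD)) // esym.
  have [kC [iC gC]] := IC1; have [kD [iD gD]] := ID1.
  have U0 : forall (A : {set T}), A :|: set0 = A by move=> A; rewrite setU0.
  split.
    have [k [ik gk _]] := glue' DnC (sub0set D) (@s0u) noCD (fun a d _ => s0o kC a d)
      (eq_rect_r (fun A => injS A kC) iC (U0 C)) (eq_rect_r (fun A => goodk A kC) gC (U0 C)) iD gD.
    by exists k; split; [apply: (injS_sub SCD ik) | apply: (goodk_sub SCD gk)].
  move=> r rS sr; case rC : (r \in C).
    have [kC' [iC' gC' mC']] := IC2 r rC (simpl_sub CS sr).
    have [k [ik gk mk]] := glue' CnD (sub0set C) (@s0u) noDC (fun a d _ => s0o kD a d)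
      (eq_rect_r (fun A => injS A kD) iD (U0 D)) (eq_rect_r (fun A => goodk A kD) gD (U0 D)) iC' gC'.
    exists k; split; [apply: (injS_sub SDC ik) | apply: (goodk_sub SDC gk)|].
    by move=> z zS zr; apply: (mk r rC mC') => //; exact: (subsetP SDC).
  have rD : r \in D by rewrite inE rC rS.
  have [kD' [iD' gD' mD']] := ID2 r rD (simpl_sub DS sr).
  have [k [ik gk mk]] := glue' DnC (sub0set D) (@s0u) noCD (fun a d _ => s0o kC a d)
    (eq_rect_r (fun A => injS A kC) iC (U0 C)) (eq_rect_r (fun A => goodk A kC) gC (U0 C)) iD' gD'.
  exists k; split; [apply: (injS_sub SCD ik) | apply: (goodk_sub SCD gk)|].
  by move=> z zS zr; apply: (mk r rD mD') => //; exact: (subsetP SCD).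
case: (classic (exists v, v \in S /\ ~ connected_on e (S :\ v))) => [[v [vS ncv]]|allc];
  last first.
  have ns : nonsep_on e S.
    split => //; split => // v vS; apply: NNPP => h; apply: allc; by exists v.
  have [k [ik ck]] := hcl ns.
  split; first by exists k; split => //; exact: clk_good.
  by move=> r rS sr; exact: (lemmaC ik ck con rS sr).
have [x [y [xS' yS' nxy]]] : exists x y,
    [/\ x \in S :\ v, y \in S :\ v & ~ connect (induced_rel e (S :\ v)) x y].
  apply: NNPP => h; apply: ncv => x y xS yS; apply: NNPP => nc; apply: h.
  by exists x, y.
have xS : x \in S by move: xS'; rewrite in_setD1 => /andP[].
have yS : y \in S by move: yS'; rewrite in_setD1 => /andP[].
have xv : x != v by move: xS'; rewrite in_setD1 => /andP[].
have yv : y != v by move: yS'; rewrite in_setD1 => /andP[].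
pose C := [set z in S :\ v | connect (induced_rel e (S :\ v)) x z].
have CS' : forall z, z \in C -> z \in S :\ v by move=> z; rewrite in_set => /andP[].
have CS : forall z, z \in C -> z \in S by move=> z /CS'; rewrite in_setD1 => /andP[].
have Cv : forall z, z \in C -> z != v by move=> z /CS'; rewrite in_setD1 => /andP[].
have vC : v \notin C by apply/negP => /Cv; rewrite eqxx.
have xC : x \in C by rewrite in_set xS' connect0.
have yC : y \notin C by rewrite in_set yS'; apply/negP.
have clC : forall a b, a \in C -> b \in S :\ v -> e a b -> b \in C.
  move=> a b aC bS' eab; move: (aC); rewrite in_set => /andP[aS' xa].
  rewrite in_set bS' /=; exact: conn_step xa aS' bS' eab.
have clC' : forall a b, a \in C -> b \in S -> b != v -> e a b -> b \in C.
  by move=> a b aC bS bv; apply: clC => //; rewrite in_setD1 bv bS.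
have [c [cC evc]] : exists c, c \in C /\ e v c.
  have [a [b [aS bS aC bC eab]]] := crossing con xS yS xC yC.
  case: (eqVneq b v) => [bv|bv]; last by rewrite (clC' a b aC bS bv eab) in bC.
  by subst; exists a; rewrite esym.
have [d [dS dC dv evd]] : exists d, [/\ d \in S, d \notin C, d != v & e v d].
  pose X := [pred z | (z \in C) || (z == v)].
  have xX : x \in X by rewrite inE xC.
  have yX : y \notin X by rewrite inE negb_or yC yv.
  have [a [b [aS bS aX bX eab]]] := crossing con xS yS xX yX.
  move: bX; rewrite inE negb_or => /andP[bC bv].
  move: aX; rewrite inE => /orP[aC|/eqP av]; first by rewrite (clC' a b aC bS bv eab) in bC.
  by subst; exists b.
pose G1 := v |: C.
pose G2 := S :\: C.
have G1S : G1 \subset S by apply/subsetP => z; rewrite in_setU1 => /orP[/eqP->//|/CS].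
have G2S : G2 \subset S by apply/subsetP => z; rewrite in_setD => /andP[].
have vG1 : v \in G1 by rewrite in_setU1 eqxx.
have vG2 : v \in G2 by rewrite in_setD vC vS.
have G1C : forall z, z \in G1 -> z != v -> z \in C.
  by move=> z; rewrite in_setU1 => /orP[/eqP->|//]; rewrite eqxx.
have G2nC : forall z, z \in G2 -> z \notin C by move=> z; rewrite in_setD => /andP[].
have nv : forall t, e v t -> t != v by move=> t evt; apply/eqP => ?; subst; rewrite eirr in evt.
have sv1 : simpl_in G1 v.
  move=> a b aG bG ab eva evb.
  have aC := G1C a aG (nv a eva); have bC := G1C b bG (nv b evb).
  apply: (claw_simpl (C := C) (v := v) (d := d)) => //.
    by apply/negP => ead; rewrite (clC' a d aC dS dv ead) in dC.
  by apply/negP => ebd; rewrite (clC' b d bC dS dv ebd) in dC.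
have sv2 : simpl_in G2 v.
  move=> a b aG bG ab eva evb.
  have aS := subsetP G2S a aG; have bS := subsetP G2S b bG.
  apply: (claw_simpl (C := G2) (v := v) (d := c)) => //.
  - by apply/negP => /G2nC; rewrite cC.
  - apply/negP => eac; move: (G2nC a aG).
    by rewrite (clC' c a cC aS (nv a eva)) // esym.
  - apply/negP => ebc; move: (G2nC b bG).
    by rewrite (clC' c b cC bS (nv b evb)) // esym.
have yG1 : y \notin G1 by rewrite in_setU1 negb_or yv yC.
have xG2 : x \notin G2 by rewrite in_setD xC.
have [IG11 IG12] := IH G1 (card_lt G1S yS yG1).
have [IG21 IG22] := IH G2 (card_lt G2S xS xG2).
(* ordering: G2 minus v first, then G1 *)
have QnP1 : forall z, z \in G1 -> z \notin G2 :\ v.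
  move=> z zG; rewrite in_setD1 negb_and negbK; case: (eqVneq z v) => //= zv.
  by rewrite in_setD (G1C z zG zv).
have DQ1 : [set v] \subset G1 by rewrite sub1set.
have edg1 : forall a b, a \in G2 :\ v -> b \in G1 -> e a b -> b \in [set v].
  move=> a b; rewrite in_setD1 => /andP[av aG] bG eab; rewrite in_set1.
  case: (eqVneq b v) => // bv; move: (G2nC a aG).
  by rewrite (clC' b a (G1C b bG bv) (subsetP G2S a aG) av) // esym.
have sub21 : (G2 :\ v) :|: [set v] \subset G2.
  by apply/subsetP => z; rewrite in_setU in_set1 in_setD1 => /orP[/andP[]//|/eqP->].
have S21 : S \subset (G2 :\ v) :|: G1.
  apply/subsetP => z zS; rewrite in_setU in_setD1 in_setD in_setU1 zS andbT.
  by case: (z == v); case: (z \in C).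
have [k2v [i2v g2v m2v]] := IG22 v vG2 sv2.
have PD1 : forall a0 d0, a0 \in G2 :\ v -> d0 \in [set v] -> k2v a0 < k2v d0.
  move=> a0 d0; rewrite in_setD1 in_set1 => /andP[av aG] /eqP->; exact: m2v.
have iA1 := injS_sub sub21 i2v; have gA1 := goodk_sub sub21 g2v.
(* ordering: C first, then G2 *)
have QnP2 : forall z, z \in G2 -> z \notin C by [].
have DQ2 : [set v] \subset G2 by rewrite sub1set.
have edg2 : forall a b, a \in C -> b \in G2 -> e a b -> b \in [set v].
  move=> a b aC bG eab; rewrite in_set1; case: (eqVneq b v) => // bv.
  by move: (G2nC b bG); rewrite (clC' a b aC (subsetP G2S b bG) bv eab).
have sub12 : C :|: [set v] \subset G1 by rewrite setUC.
have S12 : S \subset C :|: G2.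
  by apply/subsetP => z zS; rewrite in_setU in_setD zS andbT orbN.
split.
  have [k1 [i1 g1]] := IG11.
  have [k [ik gk _]] := glue' QnP1 DQ1 (@s1u v) edg1 PD1 iA1 gA1 i1 g1.
  by exists k; split; [apply: (injS_sub S21 ik) | apply: (goodk_sub S21 gk)].
move=> r rS sr.
have rv : r != v.
  apply/eqP => ?; subst r.
  have cd : c != d by apply/eqP => ?; subst; rewrite cC in dC.
  by have := sr c d (CS c cC) dS cd evc evd => ecd; rewrite (clC' c d cC dS dv ecd) in dC.
case rC : (r \in C).
  have rG1 : r \in G1 by rewrite in_setU1 rC orbT.
  have [k1 [i1 g1 m1]] := IG12 r rG1 (simpl_sub G1S sr).
  have [k [ik gk mk]] := glue' QnP1 DQ1 (@s1u v) edg1 PD1 iA1 gA1 i1 g1.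
  exists k; split; [apply: (injS_sub S21 ik) | apply: (goodk_sub S21 gk)|].
  by move=> z zS zr; apply: (mk r rG1 m1) => //; exact: (subsetP S21).
have rG2 : r \in G2 by rewrite in_setD rC rS.
have [k1v [i1v g1v m1v]] := IG12 v vG1 sv1.
have PD2 : forall a0 d0, a0 \in C -> d0 \in [set v] -> k1v a0 < k1v d0.
  move=> a0 d0 aC; rewrite in_set1 => /eqP->; apply: m1v; last exact: Cv.
  by rewrite in_setU1 aC orbT.
have [k2 [i2 g2 m2]] := IG22 r rG2 (simpl_sub G2S sr).
have [k [ik gk mk]] := glue' QnP2 DQ2 (@s1u v) edg2 PD2
  (injS_sub sub12 i1v) (goodk_sub sub12 g1v) i2 g2.
exists k; split; [apply: (injS_sub S12 ik) | apply: (goodk_sub S12 gk)|].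
by move=> z zS zr; apply: (mk r rG2 m2) => //; exact: (subsetP S12).
Qed.

End Main.

Lemma block_sup (T : finType) (e : rel T) : forall n (S : {set T}),
  #|T| - #|S| <= n -> nonsep_on e S -> exists B : {set T}, S \subset B /\ is_block e B.
Proof.
elim=> [|n IH] S hn ns;
  (case: (classic (forall B' : {set T}, S \subset B' -> nonsep_on e B' -> B' = S)) => h;
   [by exists S; split => //; split | ]);
  (have [B' [sB' nB' neq]] : exists B' : {set T}, [/\ S \subset B', nonsep_on e B' & B' <> S]
    by apply: NNPP => hh; apply: h => B' s1 n1; apply: NNPP => ne; apply: hh; exists B');
  (have lt : #|S| < #|B'| by
    apply: proper_card; rewrite properEneq sB' andbT; apply/eqP => E; apply: neq);
  have := max_card B'.
  by move=> h2; move: hn lt h2; clear; lia.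
move=> h2; have [B [sB bB]] := IH B' ltac:(move: hn lt h2; clear; lia) nB'.
by exists B; split => //; apply: subset_trans sB.
Qed.

Lemma block_clk (T : finType) (e : rel T) :
  (forall B : {set T}, is_block e B -> closed_on e B) ->
  forall S : {set T}, nonsep_on e S -> exists k, injS S k /\ clk e S k.
Proof.
move=> hbl S ns; have [B [sB bB]] := block_sup (leqnn _) ns.
have [s [hp hc]] := hbl B bB.
have mS : forall x, x \in B -> x \in s by move=> x xB; rewrite (perm_mem hp) mem_enum.
exists (fun x => index x s); split.
  apply: (injS_sub sB) => x y xB yB h.
  exact: (index_inj x (mS x xB) (mS y yB) h).
apply: (clk_sub sB) => x y z xB yB zB exy exz yz h.
by apply: (hc x y z) => //; apply: mS.
Qed.

Theorem mainTheorem16 (T : finType) (e : rel T) :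
  simple_graph e ->
  claw_free e ->
  (forall B : {set T}, is_block e B -> closed_on e B) ->
  strongly_chordal e /\ claw_free e.
Proof.
move=> [esym eirr] hclaw hbl; split => //.
have hcl := block_clk hbl.
have claim : forall n (S : {set T}), #|S| <= n -> claimP e S.
  elim=> [|n IHn] S cS; apply: (claim_step esym eirr hclaw hcl) => S' hS'.
    by move: hS' cS; clear; lia.
  by apply: IHn; move: hS' cS; clear; lia.
have [[k [ik gk]] _] := claim _ [set: T] (leqnn _).
have inT : forall x : T, x \in [set: T] by move=> x; rewrite inE.
set s := sort (fun a b => k a <= k b) (enum T).
have tr : transitive (fun a b => k a <= k b) by move=> a b c; apply: leq_trans.
have srt : sorted (fun a b => k a <= k b) s.
  by apply: sort_sorted => a b; apply: leq_total.
have hi : forall a b, a \in s -> b \in s -> index a s < index b s -> k a < k b.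
  move=> a b aS bS hab; have le := sorted_ltn_index tr srt a b aS bS hab.
  rewrite ltn_neqAle le andbT; apply/eqP => h.
  by move: hab; rewrite (ik a b (inT a) (inT b) h) ltnn.
exists s; split; first by rewrite perm_sort perm_refl.
split.
  move=> x y z xs ys zs ixy ixz exy exz yz.
  have kxy := hi _ _ xs ys ixy; have kxz := hi _ _ xs zs ixz.
  case: (ltngtP (k y) (k z)) => h.
  - have [eyz|] := gk x y z y (inT x) (inT y) (inT z) (inT y) kxy h kxy exy exz (or_introl erefl).
      by move: yz; rewrite eyz eqxx.
    by rewrite esym.
  - have [ezy|//] := gk x z y z (inT x) (inT z) (inT y) (inT z) kxz h kxz exz exy (or_introl erefl).
    by move: yz; rewrite ezy eqxx.
  - by move: yz; rewrite (ik y z (inT y) (inT z) h) eqxx.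
move=> vi vj vk vl iS jS kS lS hik hkl hij eik ekj eil jl.
have [ejl|elj] := gk vi vk vl vj (inT vi) (inT vk) (inT vl) (inT vj)
  (hi _ _ iS kS hik) (hi _ _ kS lS hkl) (hi _ _ iS jS hij) eik eil (or_intror ekj).
  by move: jl; rewrite ejl eqxx.
by rewrite esym.
Qed.
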